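(* Let $G=(V,E)$ be a weighted strongly connected directed graph on $N$ vertices with edge weights $w_{uv}\ge 0$, and let $S_0\subseteq V$ be the initial set of mutants. If $G$ is a uniform circulation, i.e. there exists $m>0$ such that $\sum_{v\in V}w_{uv}=\sum_{v\in V}w_{vu}=m$ for all $u\in V$, then $\mathsf{fp}_{r=1}^{\delta}(G,S_0)=|S_0|/N$ for every $\delta\in[0,1]$.
   Context: Mixed $\delta$-updating on a weighted directed graph $G=(V,E)$ with $N$ vertices and weights $w_{uv}\ge 0$ ($u\to v\in E$ iff $w_{uv}>0$; self-loops allowed): each vertex holds a mutant (fitness $r>0$) or wild-type (fitness $1$); $f_S(u)\in\{1,r\}$ is the fitness at $u$ when $S$ is the mutant set. At each step, with probability $\delta$ a death-Birth step: choose $v\in V$ uniformly to die, then choose $u$ with probability proportional to $f_S(u)\,w_{uv}$, and $u$ copies its type onto $v$; with probability $1-\delta$ a Birth-death step: choose $u$ with probability proportional to $f_S(u)$, then choose $v$ with probability proportional to $w_{uv}$, and $u$ copies its type onto $v$. $\mathsf{fp}_r^\delta(G,S_0)$ is the probability that all vertices eventually become mutant starting from mutant set $S_0$. *)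

(* Defs.v *)
From HB Require Import structures.
From mathcomp Require Import all_boot all_order all_algebra.
From mathcomp Require Import all_classical all_reals all_analysis.
Set Implicit Arguments. Unset Strict Implicit. Unset Printing Implicit Defensive.
Import Order.TTheory GRing.Theory Num.Theory.
Local Open Scope ring_scope.

Section Moran.
Variables (R : realType) (V : finType).

Definition fitness (r : R) (S : {set V}) (u : V) : R := if u \in S then r else 1.

(* probability that, in one step of the mixed delta-updating process from
   mutant set S, vertex u copies its type onto vertex v *)
Definition pair_prob (w : V -> V -> R) (r delta : R) (S : {set V}) (u v : V) : R :=
  delta * ((#|V|%:R)^-1 *
            (fitness r S u * w u v / \sum_(x : V) fitness r S x * w x v))
  + (1 - delta) * ((fitness r S u / \sum_(x : V) fitness r S x) *
                   (w u v / \sum_(y : V) w u y)).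

Definition copy_step (S : {set V}) (u v : V) : {set V} :=
  if u \in S then v |: S else S :\ v.

Definition trans (w : V -> V -> R) (r delta : R) (S T : {set V}) : R :=
  \sum_(u : V) \sum_(v : V)
     (if copy_step S u v == T then pair_prob w r delta S u v else 0).

Fixpoint nstep (w : V -> V -> R) (r delta : R) (n : nat) (S T : {set V}) : R :=
  match n with
  | 0%N => if S == T then 1 else 0
  | n'.+1 => \sum_(U : {set V}) nstep w r delta n' S U * trans w r delta U T
  end.

Definition edge (w : V -> V -> R) : rel V := fun u v => 0 < w u v.

Definition strongly_connected (w : V -> V -> R) : Prop :=
  forall u v : V, connect (edge w) u v.

Definition uniform_circulation (w : V -> V -> R) : Prop :=
  exists m : R, 0 < m /\
    forall u : V, \sum_(v : V) w u v = m /\ \sum_(v : V) w v u = m.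

End Moran.

(* Main.v *)
Require Import Defs.
From HB Require Import structures.
From mathcomp Require Import all_boot all_order all_algebra.
From mathcomp Require Import all_classical all_reals all_analysis.
From mathcomp Require Import ring lra zify.
Import Order.TTheory GRing.Theory Num.Theory.
Import numFieldNormedType.Exports.
Import numFieldNormedType.Exports.
Set Implicit Arguments. Unset Strict Implicit.
Local Open Scope ring_scope.

Definition pp (R : realType) (V : finType) (w : V -> V -> R) (m : R) (u v : V) : R :=
  w u v / (#|V|%:R * m).

Lemma trans_eq (R : realType) (V : finType) (w : V -> V -> R) (m delta : R) :
  (0 < #|V|)%N -> 0 < m -> (forall u : V, \sum_(v : V) w u v = m /\ \sum_(v : V) w v u = m) ->
  forall S T, trans w 1 delta S T =
    \sum_(u : V) \sum_(v : V) (if copy_step S u v == T then pp w m u v else 0).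
Proof.
move=> hN hm hs S T; apply eq_bigr => u _; apply eq_bigr => v _.
case: ifP => // _.
have f1 : forall x : V, fitness 1 S x = 1 :> R by move=> x; rewrite /fitness; case: ifP.
rewrite /pair_prob !f1.
rewrite [\sum_x _ * w x v](eq_bigr (fun x => w x v)); last by move=> x _; rewrite f1 mul1r.
rewrite [\sum_x fitness _ _ x](eq_bigr (fun x : V => 1 : R)); last by move=> x _; rewrite f1.
rewrite /pp (proj2 (hs v)) (proj1 (hs u)) sumr_const.
have hN' : (#|V|%:R : R) != 0 by rewrite pnatr_eq0 -lt0n.
have hm' : m != 0 by rewrite gt_eqF.
rewrite -[1 *+ _]mulr_natr mul1r.
field; by rewrite hN' hm'.
Qed.

Lemma sum_if_eqM (R : realType) (T : finType) (x : T) (a : R) (f : T -> R) :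
  \sum_(y : T) (if x == y then a else 0) * f y = a * f x.
Proof.
rewrite (bigD1 x) //= eqxx big1 ?addr0 // => y; rewrite eq_sym => /negbTE ->.
by rewrite mul0r.
Qed.

Lemma sum_if_eq (R : realType) (T : finType) (x : T) (a : R) :
  \sum_(y : T) (if x == y then a else 0) = a.
Proof.
rewrite -[RHS]mulr1 -(sum_if_eqM x a (fun _ => 1)).
by apply: eq_bigr => y _; rewrite mulr1.
Qed.

Section Hyps.
Lemma pp_ge0 (R : realType) (V : finType) (w : V -> V -> R) (m : R) :
  0 < m -> (forall u v, 0 <= w u v) -> forall u v, 0 <= pp w m u v.
Proof.
move=> hm hw u v; rewrite /pp divr_ge0 // mulr_ge0 // ltW //.
Qed.
End Hyps.

Lemma pp_row (R : realType) (V : finType) (w : V -> V -> R) (m : R) :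
  (0 < #|V|)%N -> 0 < m -> (forall u : V, \sum_(v : V) w u v = m /\ \sum_(v : V) w v u = m) ->
  forall u, \sum_v pp w m u v = #|V|%:R^-1.
Proof.
move=> hN hm hs u; rewrite /pp -mulr_suml (proj1 (hs u)).
have hN' : (#|V|%:R : R) != 0 by rewrite pnatr_eq0 -lt0n.
have hm' : m != 0 by rewrite gt_eqF.
field; by rewrite hN' hm'.
Qed.

Lemma pp_col (R : realType) (V : finType) (w : V -> V -> R) (m : R) :
  (0 < #|V|)%N -> 0 < m -> (forall u : V, \sum_(v : V) w u v = m /\ \sum_(v : V) w v u = m) ->
  forall v, \sum_u pp w m u v = #|V|%:R^-1.
Proof.
move=> hN hm hs v; rewrite /pp -mulr_suml (proj2 (hs v)).
have hN' : (#|V|%:R : R) != 0 by rewrite pnatr_eq0 -lt0n.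
have hm' : m != 0 by rewrite gt_eqF.
field; by rewrite hN' hm'.
Qed.

Lemma pp_sum (R : realType) (V : finType) (w : V -> V -> R) (m : R) :
  (0 < #|V|)%N -> 0 < m -> (forall u : V, \sum_(v : V) w u v = m /\ \sum_(v : V) w v u = m) ->
  \sum_u \sum_v pp w m u v = 1.
Proof.
move=> hN hm hs; under eq_bigr do rewrite (pp_row hN hm hs).
rewrite sumr_const -[_ *+ _]mulr_natr mulVf // pnatr_eq0 -lt0n //.
Qed.

Lemma card_copy (R : realType) (V : finType) (S : {set V}) (u v : V) :
  #|copy_step S u v|%:R = #|S|%:R + (u \in S)%:R * (1 - (v \in S)%:R)
     - (1 - (u \in S)%:R) * (v \in S)%:R :> R.
Proof.
rewrite /copy_step; case: (boolP (u \in S)) => hu; case: (boolP (v \in S)) => hv /=.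
- by rewrite cardsU1 hv /= add0n subrr mulr0 mul0r subr0 addr0.
- by rewrite cardsU1 hv /= natrD subr0 mulr1 subrr mul0r subr0 addrC.
- by rewrite [in RHS](cardsD1 v S) hv natrD mul0r addr0 subr0 mulr1 [true%:R + _]addrC addrK.
- by rewrite [in RHS](cardsD1 v S) (negbTE hv) add0n subr0 mul0r mulr0 addr0 subr0.
Qed.

Section TransProps.
Lemma trans_props (R : realType) (V : finType) (w : V -> V -> R) (m delta : R) :
  (0 < #|V|)%N -> 0 < m -> (forall u v, 0 <= w u v) ->
  (forall u : V, \sum_(v : V) w u v = m /\ \sum_(v : V) w v u = m) ->
  [/\ (forall S T, 0 <= trans w 1 delta S T),
      (forall S, \sum_T trans w 1 delta S T = 1),
      (forall S, \sum_T trans w 1 delta S T * #|T|%:R = #|S|%:R),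
      trans w 1 delta [set: V] [set: V] = 1 &
      trans w 1 delta finset.set0 finset.set0 = 1].
Proof.
move=> hN hm hw hs.
have tE := trans_eq delta hN hm hs.
have p0 := pp_ge0 hm hw.
split.
- move=> S T; rewrite tE; apply: sumr_ge0 => u _; apply: sumr_ge0 => v _.
  by case: ifP.
- move=> S; under eq_bigr do rewrite tE.
  rewrite exchange_big /= -(pp_sum hN hm hs); apply: eq_bigr => u _.
  rewrite exchange_big /=; apply: eq_bigr => v _; exact: sum_if_eq.
- move=> S; under eq_bigr do rewrite tE mulr_suml.
  rewrite exchange_big /=.
  under eq_bigr do (under eq_bigr do rewrite mulr_suml; rewrite exchange_big /=).
  under eq_bigr do (under eq_bigr do rewrite sum_if_eqM card_copy).
  set i := fun x : V => ((x \in S)%:R : R).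
  transitivity (\sum_u \sum_v pp w m u v * #|S|%:R +
     (\sum_u \sum_v pp w m u v * i u - \sum_u \sum_v pp w m u v * i v)).
    rewrite -sumrB -big_split /=; apply: eq_bigr => u _.
    rewrite -sumrB -big_split /=; apply: eq_bigr => v _.
    rewrite /i; ring.
  under eq_bigr do rewrite -mulr_suml.
  rewrite -mulr_suml pp_sum // mul1r.
  under eq_bigr do rewrite -mulr_suml pp_row //.
  rewrite [X in _ - X]exchange_big /=.
  under [X in _ - X]eq_bigr do rewrite -mulr_suml pp_col //.
  by rewrite subrr addr0.
- rewrite tE -(pp_sum hN hm hs); apply: eq_bigr => u _; apply: eq_bigr => v _.
  rewrite /copy_step finset.in_setT.
  have -> : v |: [set: V] = [set: V] by rewrite finset.setUT.
  by rewrite eqxx.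
- rewrite tE -(pp_sum hN hm hs); apply: eq_bigr => u _; apply: eq_bigr => v _.
  by rewrite /copy_step finset.in_set0 finset.set0D eqxx.
Qed.
End TransProps.

Lemma nstep_ge0 (R : realType) (V : finType) (w : V -> V -> R) (r delta : R) :
  (forall S T, 0 <= trans w r delta S T) -> forall n S T, 0 <= nstep w r delta n S T.
Proof.
move=> h0; elim=> [|n IH] S T /=; first by case: ifP.
by apply: sumr_ge0 => U _; apply: mulr_ge0.
Qed.

Lemma nstep_sum1 (R : realType) (V : finType) (w : V -> V -> R) (r delta : R) :
  (forall S, \sum_T trans w r delta S T = 1) -> forall n S, \sum_T nstep w r delta n S T = 1.
Proof.
move=> h1; elim=> [|n IH] S /=; first exact: sum_if_eq.
rewrite exchange_big /= -[RHS](IH S); apply: eq_bigr => U _.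
by rewrite -mulr_sumr h1 mulr1.
Qed.

Lemma nstep_card (R : realType) (V : finType) (w : V -> V -> R) (r delta : R) :
  (forall S, \sum_T trans w r delta S T * #|T|%:R = #|S|%:R) ->
  forall n S, \sum_T nstep w r delta n S T * #|T|%:R = #|S|%:R.
Proof.
move=> h1; elim=> [|n IH] S /=; first by rewrite sum_if_eqM mul1r.
under eq_bigr do rewrite mulr_suml.
rewrite exchange_big /= -[RHS](IH S); apply: eq_bigr => U _.
by rewrite -h1 mulr_sumr; apply: eq_bigr => T _; rewrite mulrA.
Qed.

Lemma nstep_add (R : realType) (V : finType) (w : V -> V -> R) (r delta : R) a b S T :
  nstep w r delta (a + b) S T =
  \sum_U nstep w r delta a S U * nstep w r delta b U T.
Proof.
elim: b T => [|b IH] T /=.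
  rewrite addn0 (bigD1 T) //= eqxx mulr1 big1 ?addr0 // => U /negbTE ->.
  by rewrite mulr0.
rewrite addnS /=.
under eq_bigr do rewrite IH mulr_suml.
rewrite exchange_big /=; apply: eq_bigr => U _.
by rewrite mulr_sumr; apply: eq_bigr => W _; rewrite mulrA.
Qed.

Lemma nstep_mono (R : realType) (V : finType) (w : V -> V -> R) (r delta : R) A :
  (forall S T, 0 <= trans w r delta S T) -> trans w r delta A A = 1 ->
  forall n S, nstep w r delta n S A <= nstep w r delta n.+1 S A.
Proof.
move=> h0 hA n S /=; rewrite (bigD1 A) //= hA mulr1 lerDl.
by apply: sumr_ge0 => U _; apply: mulr_ge0 => //; apply: nstep_ge0.
Qed.

Lemma nstep_mono_le (R : realType) (V : finType) (w : V -> V -> R) (r delta : R) A :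
  (forall S T, 0 <= trans w r delta S T) -> trans w r delta A A = 1 ->
  forall n k S, nstep w r delta n S A <= nstep w r delta (n + k) S A.
Proof.
move=> h0 hA n k S; elim: k => [|k IH]; first by rewrite addn0.
by rewrite addnS; apply: le_trans IH (nstep_mono h0 hA _ _).
Qed.

Lemma cross (T : finType) (e : rel T) (S : {set T}) s t :
  connect e s t -> s \in S -> t \notin S -> exists u v, [/\ u \in S, v \notin S & e u v].
Proof.
move/connectP => [p hp ->]; elim: p s hp => [|z p IH] s /= hp hs ht.
  by rewrite hs in ht.
case/andP: hp => hsz hp; case: (boolP (z \in S)) => hz.
  exact: IH hp hz ht.
by exists s, z.
Qed.

Lemma exists_c (R : realType) (V : finType) (w : V -> V -> R) (m delta : R) :
  (0 < #|V|)%N -> 0 < m -> (forall u v, 0 <= w u v) ->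
  (forall u : V, \sum_(v : V) w u v = m /\ \sum_(v : V) w v u = m) ->
  strongly_connected w ->
  exists c : R, [/\ 0 < c, c <= 1 &
    forall S : {set V}, S != finset.set0 -> S != [set: V] ->
      exists v, v \notin S /\ c <= trans w 1 delta S (v |: S)].
Proof.
move=> hN hm hw hs hsc.
exists (\big[Order.min/1]_(p : V * V | 0 < w p.1 p.2) pp w m p.1 p.2); split.
- apply: lt_bigmin => // p hp; by rewrite /pp divr_gt0 // mulr_gt0 // ltr0n.
- exact: bigmin_le_id.
move=> S hS0 hST.
have [s hsS] := set0Pn S hS0.
have [t ht] : exists t, t \notin S.
  apply/existsP; apply: contraNT hST => /existsPn ht.
  by apply/eqP/setP => x; rewrite finset.in_setT; have := ht x; rewrite negbK.
have [u [v [hu hv huv]]] := cross (hsc s t) hsS ht.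
exists v; split => //.
apply: (le_trans (bigmin_le_cond _ (j := (u, v)) _ huv)) => /=.
have tE := trans_eq delta hN hm hs.
have p0 := pp_ge0 hm hw.
rewrite tE (bigD1 u) //= (bigD1 v) //= /copy_step hu eqxx -addrA lerDl.
apply: addr_ge0.
  by apply: sumr_ge0 => x _; case: ifP.
by apply: sumr_ge0 => y _; apply: sumr_ge0 => x _; case: ifP.
Qed.

Lemma hit (R : realType) (V : finType) (w : V -> V -> R) (r delta c : R) :
  (forall S T, 0 <= trans w r delta S T) -> trans w r delta [set: V] [set: V] = 1 ->
  0 < c -> c <= 1 ->
  (forall S : {set V}, S != finset.set0 -> S != [set: V] ->
      exists v, v \notin S /\ c <= trans w r delta S (v |: S)) ->
  forall k (S : {set V}), S != finset.set0 -> (#|V| - #|S| <= k)%N ->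
    c ^+ k <= nstep w r delta k S [set: V].
Proof.
move=> h0 hT hc0 hc1 hc; elim=> [|k IH] S hS hk.
  have -> : S = [set: V].
    apply/eqP; rewrite eqEcard finset.subsetT cardsT /=; by rewrite -subn_eq0 -leqn0.
  by rewrite /= eqxx expr0.
case: (boolP (S == [set: V])) => hST.
  rewrite (eqP hST); apply: le_trans (exprn_ile1 _ (ltW hc0) hc1) _.
  have := nstep_mono_le h0 hT 0 k.+1 [set: V]; by rewrite /= eqxx.
have [v [hv hcv]] := hc S hS hST.
rewrite -add1n nstep_add (bigD1 (v |: S)) //= exprS.
have n1 : nstep w r delta 1 S (v |: S) = trans w r delta S (v |: S).
  by rewrite /= sum_if_eqM mul1r.
apply: (@le_trans _ _ (nstep w r delta 1 S (v |: S) * nstep w r delta k (v |: S) [set: V])).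
  rewrite n1; apply: ler_pM => //.
  - exact: ltW.
  - exact: exprn_ge0 (ltW hc0).
  apply: IH.
    by apply/set0Pn; exists v; rewrite setU11.
  by rewrite cardsU1 hv /= addnC subnDA leq_subLR add1n.
rewrite lerDl; apply: sumr_ge0 => U _; apply: mulr_ge0; last exact: nstep_ge0.
by apply: sumr_ge0 => W _; apply: mulr_ge0 => //; case: ifP.
Qed.

Unset Implicit Arguments.
Local Open Scope classical_set_scope.
Local Open Scope ring_scope.

(* fixation probability = lim_n P(X_n = V | X_0 = S0) (V is absorbing) *)
Theorem mainTheorem2 (R : realType) (V : finType) (w : V -> V -> R)
  (S0 : {set V}) (delta : R) :
  (0 < #|V|)%N ->
  (forall u v : V, 0 <= w u v) ->
  strongly_connected w ->
  uniform_circulation w ->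
  0 <= delta <= 1 ->
  (fun n : nat => nstep w 1 delta n S0 [set: V]) @ \oo -->
    (#|S0|%:R / #|V|%:R : R).
Proof.
move=> hN hw hsc [m [hm hs]] hdelta.
have [t0 t1 tc tT t0'] := trans_props delta hN hm hw hs.
have [c [hc0 hc1 hcS]] := exists_c delta hN hm hw hs hsc.
pose P n T := nstep w 1 delta n S0 T.
pose rest n := \sum_(T : {set V} | (T != [set: V]%SET) && (T != finset.set0)) P n T.
have hne : ([set: V]%SET : {set V}) != finset.set0.
  case/card_gt0P: hN => x _; apply/set0Pn; exists x; by rewrite finset.in_setT.
have hsplit : forall F : {set V} -> R, \sum_T F T =
    F [set: V]%SET + (F finset.set0 +
      \sum_(T : {set V} | (T != [set: V]%SET) && (T != finset.set0)) F T).
  move=> F; rewrite (bigD1 [set: V]%SET) //= (bigD1 finset.set0) //=.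
  by rewrite eq_sym.
have P0 : forall n T, 0 <= P n T by move=> n T; exact: nstep_ge0.
have q_eq : forall n, rest n = 1 - P n [set: V]%SET - P n finset.set0.
  move=> n; have := nstep_sum1 t1 n S0; rewrite hsplit -/(P n _) => h.
  rewrite -h /rest /P; ring.
have rest0 : forall n, 0 <= rest n by move=> n; apply: sumr_ge0 => T _; apply: P0.
have hNR : (0 : R) < #|V|%:R by rewrite ltr0n.
have bnd : forall n, 0 <= #|S0|%:R / #|V|%:R - P n [set: V]%SET <= rest n.
  move=> n; have := nstep_card tc n S0; rewrite hsplit cardsT cards0 mulr0 add0r => h.
  set rc := \sum_(T | _) _ in h.
  have rc0 : 0 <= rc by apply: sumr_ge0 => T _; apply: mulr_ge0 => //; apply: P0.
  have rc1 : rc <= rest n * #|V|%:R.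
    rewrite /rest mulr_suml; apply: ler_sum => T _; apply: ler_wpM2l.
      by apply: P0.
    by rewrite ler_nat -cardsT subset_leq_card // finset.subsetT.
  rewrite -h mulrDl mulfK ?gt_eqF // addrAC subrr add0r.
  apply/andP; split; first by apply: divr_ge0 => //; apply: ltW.
  by rewrite ler_pdivrMr.
have amono : forall n k, P n [set: V]%SET <= P (n + k)%N [set: V]%SET.
  by move=> n k; apply: nstep_mono_le.
have bmono : forall n k, P n finset.set0 <= P (n + k)%N finset.set0.
  by move=> n k; apply: nstep_mono_le.
set eps := c ^+ #|V|.
have eps0 : 0 < eps by rewrite exprn_gt0.
have eps1 : eps <= 1 by rewrite exprn_ile1 // ltW.
have hitN : forall U : {set V}, U != finset.set0 -> eps <= nstep w 1 delta #|V| U [set: V]%SET.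
  move=> U hU; apply: hit => //; exact: leq_subr.
have TT : 1 <= nstep w 1 delta #|V| [set: V]%SET [set: V]%SET.
  have := nstep_mono_le t0 tT 0 #|V| [set: V]%SET; by rewrite /= eqxx.
have contr : forall n, rest (n + #|V|)%N <= (1 - eps) * rest n.
  move=> n.
  have ha : P n [set: V]%SET + eps * rest n <= P (n + #|V|)%N [set: V]%SET.
    rewrite /P nstep_add hsplit -/(P n _).
    apply: lerD.
      by rewrite -[X in X <= _]mulr1; apply: ler_wpM2l.
    rewrite -[X in X <= _]add0r; apply: lerD.
      by apply: mulr_ge0 => //; apply: nstep_ge0.
    rewrite /rest mulr_sumr; apply: ler_sum => T /andP [_ hT].
    by rewrite mulrC; apply: ler_wpM2l; [apply: P0 | apply: hitN].
  have hb := bmono n #|V|.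
  have hq := q_eq n.
  rewrite (q_eq (n + #|V|)%N) mulrBl mul1r.
  set X := eps * rest n in ha *; clearbody X.
  move: ha hb hq; generalize (rest n) (P n [set: V]%SET) (P (n + #|V|)%N [set: V]%SET)
    (P n finset.set0) (P (n + #|V|)%N finset.set0) => r1 a1 a2 b1 b2.
  lra.
have qanti : forall n k, rest (n + k)%N <= rest n.
  move=> n k; rewrite !q_eq.
  have := amono n k; have := bmono n k.
  generalize (P n [set: V]%SET) (P (n + k)%N [set: V]%SET)
    (P n finset.set0) (P (n + k)%N finset.set0) => a1 a2 b1 b2; lra.
have qgeo : forall k, rest (k * #|V|)%N <= (1 - eps) ^+ k.
  elim=> [|k IH].
    rewrite mul0n expr0 q_eq.
    have := P0 0%N [set: V]%SET; have := P0 0%N finset.set0.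
    generalize (P 0%N [set: V]%SET) (P 0%N finset.set0) => a1 b1; lra.
  rewrite mulSn addnC exprS; apply: le_trans (contr _) _.
  by apply: ler_wpM2l => //; rewrite subr_ge0.
have heps : `|1 - eps| < 1.
  rewrite ger0_norm ?subr_ge0 //; lra.
apply/cvgrPdist_lt => e he.
have := cvg_expr heps; move/cvgrPdist_lt/(_ e he) => [k0 _ Hk0].
exists (k0 * #|V|)%N => // n /= hn.
have h1 := Hk0 k0 (leqnn k0); rewrite /= sub0r normrN ger0_norm in h1; last first.
  by apply: exprn_ge0; rewrite subr_ge0.
have /andP [b0 b1] := bnd n.
rewrite -/(P n _) ger0_norm //.
apply: le_lt_trans b1 _; apply: le_lt_trans _ h1.
apply: le_trans _ (qgeo k0).
by rewrite -(subnKC hn); apply: qanti.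
Qed.
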